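(* Let $G$ be a finite simple graph and let $P$ be a solvable pebble distribution on $G$. Then $$\sum_{v\in V(G)}\mathrm{ef}(v)P(v)\geq |V(G)|+\mathrm{TE}(P).$$
   Context: A pebble distribution on $G$ is a function $P:V(G)\to\mathbb{Z}_{\geq 0}$. A pebbling move from a vertex $u$ with at least two pebbles to an adjacent vertex $v$ removes two pebbles from $u$ and adds one to $v$. A vertex $v$ is $k$-reachable under $P$ if some executable sequence of pebbling moves (never making a pebble count negative) yields a distribution with at least $k$ pebbles on $v$; reachable means $1$-reachable. $P$ is solvable if every vertex is reachable. $\mathrm{reach}(P,v)$ is the largest $k$ such that $v$ is $k$-reachable under $P$. The excess $\mathrm{exc}(P,v)$ is $\mathrm{reach}(P,v)-1$ if $v$ is reachable and $0$ otherwise; the total excess is $\mathrm{TE}(P)=\sum_{v\in V(G)}\mathrm{exc}(P,v)$. For a vertex $v$, $N_i(v)$ is the set of vertices at distance exactly $i$ from $v$, and the effect of $v$ is $\mathrm{ef}(v)=\sum_{i\geq 0}(1/2)^i|N_i(v)|$. *)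

(* Defs.v *)
From mathcomp Require Import all_boot all_order all_algebra.
From Stdlib Require Import Relations ClassicalEpsilon.
Set Implicit Arguments. Unset Strict Implicit. Unset Printing Implicit Defensive.
Import Order.TTheory GRing.Theory Num.Theory.

Definition simple_graph (T : finType) (e : rel T) : Prop :=
  (forall x y, e x y = e y x) /\ (forall x, e x x = false).

Definition pebbling_move (T : finType) (e : rel T) (P Q : {ffun T -> nat}) : Prop :=
  exists u v, e u v /\ 2 <= P u /\
    Q = [ffun x => P x - (x == u) * 2 + (x == v)].

Definition pebble_reach (T : finType) (e : rel T) : relation {ffun T -> nat} :=
  clos_refl_trans _ (@pebbling_move T e).

Definition kreachable (T : finType) (e : rel T) (P : {ffun T -> nat}) (v : T) (k : nat) : Prop :=
  exists Q, pebble_reach e P Q /\ k <= Q v.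

Definition reachable (T : finType) (e : rel T) (P : {ffun T -> nat}) (v : T) : Prop :=
  kreachable e P v 1.

Definition solvable (T : finType) (e : rel T) (P : {ffun T -> nat}) : Prop :=
  forall v, reachable e P v.

Definition asb (A : Prop) : bool :=
  if excluded_middle_informative A then true else false.

(* Moves never
   increase the total number of pebbles, so any such k is at most the total
   number of pebbles \sum_x P x; the max is therefore taken over that range. *)
Definition reach (T : finType) (e : rel T) (P : {ffun T -> nat}) (v : T) : nat :=
  \max_(k < (\sum_x P x).+1 | asb (kreachable e P v k)) (k : nat).

Definition exc (T : finType) (e : rel T) (P : {ffun T -> nat}) (v : T) : nat :=
  if asb (reachable e P v) then reach e P v - 1 else 0.

Definition total_excess (T : finType) (e : rel T) (P : {ffun T -> nat}) : nat :=
  \sum_v exc e P v.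

Fixpoint ball (T : finType) (e : rel T) (v : T) (i : nat) : {set T} :=
  match i with
  | 0 => [set v]
  | i'.+1 => ball e v i' :|: [set y | [exists x in ball e v i', e x y]]
  end.

Definition sphere (T : finType) (e : rel T) (v : T) (i : nat) : {set T} :=
  match i with
  | 0 => [set v]
  | i'.+1 => ball e v i'.+1 :\: ball e v i'
  end.

(* ef(v) = \sum_{i >= 0} (1/2)^i |N_i(v)|; distances are < #|T|, so
   N_i(v) is empty for i >= #|T| and the sum is over i < #|T|. *)
Definition effect (T : finType) (e : rel T) (v : T) : rat :=
  \sum_(i < #|T|) (2%:R ^- i : rat) * (#|sphere e v i|)%:R.

(* Main.v *)
Require Import Defs.
From mathcomp Require Import all_boot all_order all_algebra.
From Stdlib Require Import Relations ClassicalEpsilon.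
From mathcomp Require Import lra.
Import Order.TTheory GRing.Theory Num.Theory.
Local Open Scope ring_scope.
Set Implicit Arguments. Unset Strict Implicit.

Section S.
Variables (T : finType) (e : rel T).

Lemma ballS x i : ball e x i.+1 = ball e x i :|: [set y | [exists z in ball e x i, e z y]].
Proof. by []. Qed.

Lemma ball_mono x i j : (i <= j)%N -> ball e x i \subset ball e x j.
Proof.
move=> /subnK <-; elim: (j - i)%N => [|k IH]; first by rewrite add0n.
by rewrite addSn ballS; apply: subset_trans IH (subsetUl _ _).
Qed.

Lemma ball_edge u v r i : e u v -> r \in ball e v i -> r \in ball e u i.+1.
Proof.
move=> huv; elim: i r => [|i IH] r.
  move=> hr; move: hr; rewrite [ball e v 0]/= in_set1 => /eqP ->; rewrite ballS !inE; apply/orP; right.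
  by apply/existsP; exists u; rewrite /= inE eqxx huv.
rewrite ballS inE => /orP [/IH h| ]; first by rewrite ballS inE h.
rewrite inE => /existsP [z /andP [hz hzr]].
rewrite ballS inE; apply/orP; right; rewrite inE; apply/existsP; exists z.
by rewrite (IH _ hz).
Qed.

Lemma sphere_ball x i : sphere e x i \subset ball e x i.
Proof. by case: i => [|i] //=; apply: subsetDl. Qed.

Lemma sphere_uniq x r i j : r \in sphere e x i -> r \in sphere e x j -> i = j.
Proof.
wlog hij : i j / (i <= j)%N.
  move=> W hi hj; case: (leqP i j) => h; first exact: W.
  by apply/esym/W => //; apply: ltnW.
move=> hi hj; apply/eqP; rewrite eqn_leq hij /= leqNgt; apply/negP => hlt.
have : r \in ball e x i by apply: (subsetP (sphere_ball _ _)).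
move: hj; case: j hij hlt => [|j] // _ hlt.
rewrite /= inE => /andP [hn _] hb; move/negP: hn; apply.
exact: (subsetP (@ball_mono x i j hlt)).
Qed.

Lemma ball_sphere x r k : r \in ball e x k -> exists2 i, (i <= k)%N & r \in sphere e x i.
Proof.
elim: k => [|k IH] hr; first by exists 0%N.
case hk: (r \in ball e x k); first by have [i hi hs] := IH hk; exists i => //; apply: leqW.
by exists k.+1 => //; rewrite /= inE hk hr.
Qed.

Lemma ball_stable x k : ball e x k = ball e x k.+1 -> forall m, ball e x (k + m) = ball e x k.
Proof.
move=> h; elim=> [|m IH]; first by rewrite addn0.
by rewrite addnS ballS IH -ballS -h.
Qed.

Lemma card_grow x m : (forall k, (k < m)%N -> ball e x k != ball e x k.+1) -> (m < #|ball e x m|)%N.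
Proof.
elim: m => [|m IH] h; first by rewrite /= cards1.
have h1 := IH (fun k hk => h k (leqW hk)).
apply: leq_ltn_trans h1 _; apply: proper_card; rewrite properEneq h //=.
exact: subsetUl.
Qed.

Lemma ball_stab x k : ball e x k \subset ball e x (#|T|.-1).
Proof.
have n0 : (0 < #|T|)%N by apply/card_gt0P; exists x.
case: (leqP k #|T|.-1) => hk; first exact: ball_mono.
case: (boolP [exists j : 'I_#|T|, ball e x j == ball e x j.+1]).
  move=> /existsP [j /eqP hj].
  have hjn : (j <= #|T|.-1)%N by rewrite -ltnS prednK.
  have hjk : (j <= k)%N by apply: leq_trans hjn (ltnW hk).
  rewrite -(subnKC hjk) ball_stable //; exact: ball_mono.
rewrite negb_exists => /forallP hn.
have : (#|T| < #|ball e x #|T| |)%N.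
  apply: card_grow => j hj; exact: (hn (Ordinal hj)).
by rewrite ltnNge max_card.
Qed.

Definition phi x r : rat := \sum_(i < #|T|) (2%:R ^- i : rat) * (r \in sphere e x i)%:R.

Lemma phi_val x r i : r \in sphere e x i -> (i < #|T|)%N -> phi x r = 2%:R ^- i.
Proof.
move=> hs hi; rewrite /phi (bigD1 (Ordinal hi)) //= hs mulr1 big1 ?addr0 //.
move=> j hj; case hr: (r \in sphere e x j); last by rewrite mulr0.
by move: hj; rewrite -val_eqE /= (sphere_uniq hr hs) eqxx.
Qed.

Lemma phi_ge0 x r : 0 <= phi x r.
Proof. by apply: sumr_ge0 => i _; apply: mulr_ge0; rewrite ?invr_ge0 ?exprn_ge0 ?ler0n. Qed.

Lemma phi_edge u v r : e u v -> phi v r <= 2%:R * phi u r.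
Proof.
move=> huv.
case: (boolP [exists i : 'I_#|T|, r \in sphere e v i]); last first.
  rewrite negb_exists => /forallP hn.
  rewrite /phi big1 ?mulr_ge0 ?ler0n ?phi_ge0 // => i _.
  by rewrite (negbTE (hn i)) mulr0.
move=> /existsP [[i hi] /= hs].
have hb : r \in ball e v i by apply: (subsetP (sphere_ball v i)).
have hb1 := ball_edge huv hb.
have hb2 : r \in ball e u (minn i.+1 #|T|.-1).
  case: (leqP i.+1 #|T|.-1) => h.
    by [].
  by apply: (subsetP (ball_stab u i.+1)).
have [j hj hsj] := ball_sphere hb2.
have hjn : (j < #|T|)%N.
  apply: leq_ltn_trans (leq_trans hj (geq_minr _ _)) _.
  by rewrite prednK // (leq_ltn_trans _ hi).
have hji : (j <= i.+1)%N by apply: leq_trans hj (geq_minl _ _).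
rewrite (phi_val hs hi) (phi_val hsj hjn).
have -> : (2%:R ^- i : rat) = 2%:R * 2%:R ^- i.+1.
  by rewrite exprS invfM mulrA mulfV ?mul1r // pnatr_eq0.
rewrite ler_pM2l ?ltr0n // -!exprVn; apply: ler_wiXn2l => //.
all: rewrite ?invr_ge0 ?ler0n ?invf_le1 ?ltr0n ?ler1n //.
Qed.

Definition W r (Q : {ffun T -> nat}) : rat := \sum_x (Q x)%:R * phi x r.

Lemma sum_delta (f : T -> rat) u : \sum_x (x == u)%:R * f x = f u.
Proof.
rewrite (bigD1 u) //= eqxx mul1r big1 ?addr0 // => x /negbTE ->.
by rewrite mul0r.
Qed.

Lemma move_W r P Q : pebbling_move e P Q -> W r Q <= W r P.
Proof.
move=> [u [v [huv [hP ->]]]].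
have E : forall x, ([ffun x => (P x - (x == u) * 2 + (x == v))%N] x)%:R =
   (P x)%:R - (x == u)%:R * 2%:R + (x == v)%:R :> rat.
  move=> x; rewrite ffunE natrD natrB ?natrM //.
  by case: (eqVneq x u) => [->|] //=; rewrite mul1n.
rewrite /W; under eq_bigr => x _ do rewrite E mulrDl mulrBl.
rewrite big_split /= sumrB.
under [X in _ - X + _ <= _]eq_bigr => x _ do rewrite mulrAC.
rewrite -[X in _ - X + _ <= _]mulr_suml !sum_delta.
have := phi_edge r huv; lra.
Qed.

Lemma reach_W r P Q : pebble_reach e P Q -> W r Q <= W r P.
Proof.
elim=> [P1 Q1 h| P1 | P1 Q1 R1 _ h1 _ h2].
- exact: move_W.
- by [].
- exact: le_trans h2 h1.
Qed.

Lemma Q_le_W r (Q : {ffun T -> nat}) : (Q r)%:R <= W r Q.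
Proof.
have n0 : (0 < #|T|)%N by apply/card_gt0P; exists r.
have hr : r \in sphere e r 0 by rewrite /= in_set1.
rewrite /W (bigD1 r) //= (phi_val hr n0) expr0 invr1 mulr1 lerDl.
by apply: sumr_ge0 => x _; apply: mulr_ge0; rewrite ?ler0n ?phi_ge0.
Qed.

Lemma kreach_W P r k : kreachable e P r k -> k%:R <= W r P.
Proof.
move=> [Q [hQ hk]]; apply: le_trans (reach_W r hQ).
apply: le_trans (Q_le_W r Q); by rewrite ler_nat.
Qed.

Lemma asbP (A : Prop) : asb A = true <-> A.
Proof. by rewrite /asb; case: excluded_middle_informative. Qed.

Lemma exc_W P r : reachable e P r -> 1 + (exc e P r)%:R <= W r P.
Proof.
move=> hr; rewrite /exc.
have -> : asb (reachable e P r) = true by apply/asbP.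
have h1 := kreach_W hr.
have hm : (reach e P r)%:R <= W r P.
  rewrite /reach; apply: (big_ind (fun m : nat => m%:R <= W r P)).
  - by apply: le_trans h1; rewrite ler0n.
  - by move=> a b ha hb; rewrite /maxn; case: ifP.
  - by move=> k /asbP hk; apply: kreach_W.
case: (reach e P r) hm => [|m] hm /=; first by rewrite addr0.
by rewrite subn1 /= addrC natr1.
Qed.

End S.

Unset Implicit Arguments.
Theorem theorem2p1 (T : finType) (e : rel T) (P : {ffun T -> nat}) :
  simple_graph e -> solvable e P ->
  (#|T|%:R + (total_excess e P)%:R : rat) <= \sum_(v : T) effect e v * (P v)%:R.
Proof.
move=> _ hs.
have -> : (#|T|%:R + (total_excess e P)%:R : rat) = \sum_v (1 + (exc e P v)%:R).
  rewrite big_split /= /total_excess natr_sum; congr (_ + _).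
  by rewrite sumr_const cardT -cardE.
apply: le_trans (ler_sum _ (fun v _ => exc_W (hs v))) _.
rewrite /W exchange_big /=; apply: ler_sum => x _.
rewrite -mulr_sumr mulrC /effect /phi exchange_big /=; apply: ler_wpM2r; first by rewrite ler0n.
rewrite le_eqVlt; apply/orP; left; apply/eqP; apply: eq_bigr => j _; rewrite -mulr_sumr; congr (_ * _).
rewrite (eq_bigr (fun i => if i \in sphere e x j then 1 else 0)); last by move=> i _; case: (_ \in _).
by rewrite -big_mkcond /= sumr_const.
Qed.
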